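(* For $N<N'$ let $\iota_{N,N'}:\mathcal M(N,K)\to\mathcal M(N',K)$ be the closed embedding $(B,\psi,\overline\psi)\mapsto\left(\begin{bmatrix}B&0\\0&0\end{bmatrix},\begin{bmatrix}\psi\\0\end{bmatrix},\begin{bmatrix}\overline\psi&0\end{bmatrix}\right)$. Then: (1) $\iota_{N',N''}\circ\iota_{N,N'}=\iota_{N,N''}$ for $N<N'<N''$; (2) $\iota_{N,N'}$ is Poisson; (3) $\mathfrak m_{N_1',N_2'}\circ(\iota_{N_1,N_1'}\times\iota_{N_2,N_2'})=\iota_{N_1+N_2,N_1'+N_2'}\circ\mathfrak m_{N_1,N_2}$ for $N_1\le N_1'$, $N_2\le N_2'$ (with $\iota_{N,N}=\mathrm{Id}$).
   Context: $\mathcal M(N,K)=\mathrm{Rep}(N,K)/\!/\mathrm{GL}_N$, with $\mathrm{Rep}(N,K)$ the triples $(B,\psi,\overline\psi)$, $B\in\mathrm{Mat}_{N\times N}(\mathbb C)$, $\psi\in\mathrm{Mat}_{N\times K}$, $\overline\psi\in\mathrm{Mat}_{K\times N}$, and $g\cdot(B,\psi,\overline\psi)=(gBg^{-1},g\psi,\overline\psi g^{-1})$. The Poisson structure on $\mathcal M(N,K)$ is induced from $\{\psi_{ia},\overline\psi_{bj}\}=\delta_{ab}\delta_{ij}$, $\{B_{mn},B_{pq}\}=\delta_{np}\sum_a\overline\psi_{aq}\psi_{ma}-\delta_{mq}\sum_a\overline\psi_{an}\psi_{pa}$, $\{B_{mn},\psi_{ia}\}=\{B_{mn},\overline\psi_{bj}\}=0$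 (commuting variables). $\mathfrak m_{N_1,N_2}$ sends $(B^{(1)},\psi^{(1)},\overline\psi^{(1)})\times(B^{(2)},\psi^{(2)},\overline\psi^{(2)})$ to $\left(\begin{bmatrix}B^{(1)}&\psi^{(1)}\overline\psi^{(2)}\\-\psi^{(2)}\overline\psi^{(1)}&B^{(2)}\end{bmatrix},\begin{bmatrix}\psi^{(1)}\\\psi^{(2)}\end{bmatrix},\begin{bmatrix}\overline\psi^{(1)}&\overline\psi^{(2)}\end{bmatrix}\right)$. *)

(* Defs.v *)
From HB Require Import structures.
From mathcomp Require Import all_boot all_algebra.
From mathcomp Require Import mpoly.
Set Implicit Arguments. Unset Strict Implicit. Unset Printing Implicit Defensive.
Import GRing.Theory.
Local Open Scope ring_scope.

(* Coordinates of Rep(N,K) = Mat_{NxN} x Mat_{NxK} x Mat_{KxN}: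
   nv N K = N*N + N*K + K*N coordinates, ordered as (B, psi, psibar),
   each matrix flattened with mxvec. *)
Definition nv (N K : nat) : nat := N * N + N * K + K * N.

Definition flat (R : Type) (N K : nat)
  (B : 'M[R]_N) (psi : 'M[R]_(N, K)) (psib : 'M[R]_(K, N)) : 'rV[R]_(nv N K) :=
  row_mx (row_mx (mxvec B) (mxvec psi)) (mxvec psib).

Definition iB (N K : nat) (i j : 'I_N) : 'I_(nv N K) :=
  lshift (K * N) (lshift (N * K) (mxvec_index i j)).
Definition iPsi (N K : nat) (i : 'I_N) (a : 'I_K) : 'I_(nv N K) :=
  lshift (K * N) (rshift (N * N) (mxvec_index i a)).
Definition iPsib (N K : nat) (b : 'I_K) (j : 'I_N) : 'I_(nv N K) :=
  rshift (N * N + N * K) (mxvec_index b j).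

Section Poly.
Variable F : numClosedFieldType.

Definition evalRep (N K : nat) (p : {mpoly F[nv N K]})
  (B : 'M[F]_N) (psi : 'M[F]_(N, K)) (psib : 'M[F]_(K, N)) : F :=
  p.@[fun k => flat B psi psib 0 k].

(* GL_N-invariant polynomials: the coordinate ring of M(N,K) = Rep(N,K)//GL_N,
   for the action g.(B,psi,psibar) = (g B g^-1, g psi, psibar g^-1). *)
Definition gl_invariant (N K : nat) (p : {mpoly F[nv N K]}) : Prop :=
  forall (g : 'M[F]_N), g \in unitmx ->
  forall (B : 'M[F]_N) (psi : 'M[F]_(N, K)) (psib : 'M[F]_(K, N)),
    evalRep p (g *m B *m invmx g) (g *m psi) (psib *m invmx g)
    = evalRep p B psi psib.

(* Coordinate functions, pulled back along a renaming of variables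
   e : 'I_(nv N K) -> 'I_n (identity for Rep(N,K) itself, lshift/rshift for
   the two factors of Rep(N1,K) x Rep(N2,K)). *)
Definition XB (n N K : nat) (e : 'I_(nv N K) -> 'I_n) : 'M[{mpoly F[n]}]_N :=
  \matrix_(i, j) 'X_(e (iB K i j)).
Definition XPsi (n N K : nat) (e : 'I_(nv N K) -> 'I_n) : 'M[{mpoly F[n]}]_(N, K) :=
  \matrix_(i, a) 'X_(e (iPsi i a)).
Definition XPsib (n N K : nat) (e : 'I_(nv N K) -> 'I_n) : 'M[{mpoly F[n]}]_(K, N) :=
  \matrix_(b, j) 'X_(e (iPsib b j)).

Definition pullback (n N K : nat)
  (B : 'M[{mpoly F[n]}]_N) (psi : 'M[{mpoly F[n]}]_(N, K))
  (psib : 'M[{mpoly F[n]}]_(K, N)) (p : {mpoly F[nv N K]}) : {mpoly F[n]} :=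
  comp_mpoly (mktuple (fun k => flat B psi psib 0 k)) p.

(* The Poisson bracket on C[Rep(N,K)]:
   {f,g} = sum_{x,y} (df/dx)(dg/dy){x,y} with
   {psi_ia, psibar_bj} = delta_ab delta_ij (and its antisymmetric counterpart),
   {B_mn, B_pq} = delta_np sum_a psibar_aq psi_ma - delta_mq sum_a psibar_an psi_pa,
   all other brackets of coordinates zero. *)
Definition pbracket (N K : nat) (f g : {mpoly F[nv N K]}) : {mpoly F[nv N K]} :=
  let psi := XPsi (@id _) in
  let psib := XPsib (@id _) in
  \sum_(i < N) \sum_(a < K)
     (f^`M(iPsi i a) * g^`M(iPsib a i) - f^`M(iPsib a i) * g^`M(iPsi i a))
  + \sum_(m < N) \sum_(n < N) \sum_(p < N) \sum_(q < N)
     f^`M(iB K m n) * g^`M(iB K p q) *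
     ((n == p)%:R * \sum_(a < K) psib a q * psi m a
      - (m == q)%:R * \sum_(a < K) psib a n * psi p a).
End Poly.

Definition pad (R : nzRingType) (m n m' n' : nat) (A : 'M[R]_(m, n)) : 'M[R]_(m', n') :=
  \matrix_(i, j)
    match @insub _ (fun k => k < m)%N 'I_m (val i), @insub _ (fun k => k < n)%N 'I_n (val j) with
    | Some i', Some j' => A i' j'
    | _, _ => 0
    end.

Definition iotaB (R : nzRingType) (N N' : nat) (B : 'M[R]_N) : 'M[R]_N' := pad N' N' B.
Definition iotaPsi (R : nzRingType) (N N' K : nat) (psi : 'M[R]_(N, K)) : 'M[R]_(N', K) :=
  pad N' K psi.
Definition iotaPsib (R : nzRingType) (N N' K : nat) (psib : 'M[R]_(K, N)) : 'M[R]_(K, N') :=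
  pad K N' psib.

Definition mB (R : nzRingType) (N1 N2 K : nat)
  (B1 : 'M[R]_N1) (psi1 : 'M[R]_(N1, K)) (psib1 : 'M[R]_(K, N1))
  (B2 : 'M[R]_N2) (psi2 : 'M[R]_(N2, K)) (psib2 : 'M[R]_(K, N2)) : 'M[R]_(N1 + N2) :=
  block_mx B1 (psi1 *m psib2) (- (psi2 *m psib1)) B2.
Definition mPsi (R : nzRingType) (N1 N2 K : nat)
  (psi1 : 'M[R]_(N1, K)) (psi2 : 'M[R]_(N2, K)) : 'M[R]_(N1 + N2, K) :=
  col_mx psi1 psi2.
Definition mPsib (R : nzRingType) (N1 N2 K : nat)
  (psib1 : 'M[R]_(K, N1)) (psib2 : 'M[R]_(K, N2)) : 'M[R]_(K, N1 + N2) :=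
  row_mx psib1 psib2.

Definition iota_pb (F : numClosedFieldType) (N N' K : nat) (p : {mpoly F[nv N' K]})
  : {mpoly F[nv N K]} :=
  pullback (iotaB N' (XB F (@id _))) (iotaPsi N' (XPsi F (@id _)))
           (iotaPsib N' (XPsib F (@id _))) p.
Arguments iota_pb {F} N N' K p.

(* Main.v *)
Require Import Defs.
From HB Require Import structures.
From mathcomp Require Import all_boot all_algebra.
From mathcomp Require Import mpoly.
Import GRing.Theory.
Local Open Scope ring_scope.
From mathcomp Require Import fingroup perm.
From mathcomp Require Import zify ring.
Set Implicit Arguments. Unset Strict Implicit. Unset Printing Implicit Defensive.
Import GRing.Theory Num.Theory.
Local Open Scope ring_scope.


Section Flat.
Variables (T : Type) (N K : nat).

Lemma flat_iB (B : 'M[T]_N) (psi : 'M[T]_(N, K)) (psib : 'M[T]_(K, N)) i j :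
  flat B psi psib 0 (iB K i j) = B i j.
Proof. by rewrite /flat /iB !row_mxEl mxvecE. Qed.
Lemma flat_iPsi (B : 'M[T]_N) (psi : 'M[T]_(N, K)) (psib : 'M[T]_(K, N)) i a :
  flat B psi psib 0 (iPsi i a) = psi i a.
Proof. by rewrite /flat /iPsi row_mxEl row_mxEr mxvecE. Qed.
Lemma flat_iPsib (B : 'M[T]_N) (psi : 'M[T]_(N, K)) (psib : 'M[T]_(K, N)) b j :
  flat B psi psib 0 (iPsib b j) = psib b j.
Proof. by rewrite /flat /iPsib row_mxEr mxvecE. Qed.

Variant flat_spec : 'I_(nv N K) -> Type :=
 | FB (i j : 'I_N) : flat_spec (iB K i j)
 | FPsi (i : 'I_N) (a : 'I_K) : flat_spec (iPsi i a)
 | FPsib (b : 'I_K) (j : 'I_N) : flat_spec (iPsib b j).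

Lemma flatP k : flat_spec k.
Proof.
rewrite -[k]splitK; case: (split k) => [k1|k2] /=.
  rewrite -[k1]splitK; case: (split k1) => [k11|k12] /=.
    by case/mxvec_indexP: k11 => i j; apply: FB.
  by case/mxvec_indexP: k12 => i j; apply: FPsi.
by case/mxvec_indexP: k2 => i j; apply: FPsib.
Qed.
End Flat.

Lemma flat_map (T U : Type) N K (f : T -> U) (B : 'M[T]_N) (psi : 'M[T]_(N, K)) (psib : 'M[T]_(K, N)) k :
  flat (map_mx f B) (map_mx f psi) (map_mx f psib) 0 k = f (flat B psi psib 0 k).
Proof. by case: (flatP k) => *; rewrite !(flat_iB, flat_iPsi, flat_iPsib) mxE. Qed.

Lemma flat_eta (T : Type) N K (v : 'I_(nv N K) -> T) k :
  flat (\matrix_(i, j) v (iB K i j)) (\matrix_(i, a) v (iPsi i a)) (\matrix_(b, j) v (iPsib b j)) 0 k = v k.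
Proof. by case: (flatP k) => *; rewrite !(flat_iB, flat_iPsi, flat_iPsib) mxE. Qed.

Definition dec N K : 'I_(nv N K) -> ('I_N * 'I_N) + (('I_N * 'I_K) + ('I_K * 'I_N)) :=
  flat (\matrix_(i, j) inl (i, j)) (\matrix_(i, a) inr (inl (i, a))) (\matrix_(b, j) inr (inr (b, j))) 0.

Lemma iB_inj N K i j i' j' : iB K i j = iB K i' j' :> 'I_(nv N K) -> i = i' /\ j = j'.
Proof. move/(congr1 (@dec N K)); rewrite /dec !flat_iB !mxE; by case=> -> ->. Qed.
Lemma iPsi_inj N K i j i' j' : iPsi i j = iPsi i' j' :> 'I_(nv N K) -> i = i' /\ j = j'.
Proof. move/(congr1 (@dec N K)); rewrite /dec !flat_iPsi !mxE; by case=> -> ->. Qed.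
Lemma iPsib_inj N K i j i' j' : iPsib i j = iPsib i' j' :> 'I_(nv N K) -> i = i' /\ j = j'.
Proof. move/(congr1 (@dec N K)); rewrite /dec !flat_iPsib !mxE; by case=> -> ->. Qed.


Definition ins (m : nat) (x : nat) : option 'I_m := @insub _ (fun k => k < m)%N 'I_m x.

Lemma ins_some m (k : 'I_m) x : val k = x -> ins m x = Some k.
Proof. by move<-; rewrite /ins valK. Qed.
Lemma ins_none m x : (m <= x)%N -> ins m x = None.
Proof. by move=> h; rewrite /ins insubF // ltnNge h. Qed.
Lemma insK m (k : 'I_m) : ins m (val k) = Some k.
Proof. exact: ins_some. Qed.

Lemma insP m x : (exists2 k : 'I_m, val k = x & ins m x = Some k) \/ ((m <= x)%N /\ ins m x = None).
Proof.
case: (ltnP x m) => h; last by right; rewrite ins_none.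
by left; exists (Ordinal h) => //; rewrite (ins_some (k := Ordinal h)).
Qed.

Section Get.
Variable R : nzRingType.

Definition get m n (A : 'M[R]_(m, n)) (i j : nat) : R :=
  match ins m i, ins n j with Some i', Some j' => A i' j' | _, _ => 0 end.

Lemma getE m n (A : 'M[R]_(m, n)) (i : 'I_m) (j : 'I_n) : A i j = get A i j.
Proof. by rewrite /get !insK. Qed.

Lemma get_outl m n (A : 'M[R]_(m, n)) i j : (m <= i)%N -> get A i j = 0.
Proof. by move=> h; rewrite /get ins_none. Qed.
Lemma get_outr m n (A : 'M[R]_(m, n)) i j : (n <= j)%N -> get A i j = 0.
Proof. by move=> h; rewrite /get (ins_none h); case: ins. Qed.

Lemma padE m n m' n' (A : 'M[R]_(m, n)) (i : 'I_m') (j : 'I_n') :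
  pad m' n' A i j = get A i j.
Proof. by rewrite mxE. Qed.

Lemma get_pad m n m' n' (A : 'M[R]_(m, n)) i j :
  get (pad m' n' A) i j = if (i < m')%N && (j < n')%N then get A i j else 0.
Proof.
case: (insP m' i) => [[i' <- Ei]|[hi Ei]]; last first.
  by rewrite get_outl //; case: ifP => //; lia.
case: (insP n' j) => [[j' <- Ej]|[hj Ej]]; last first.
  by rewrite get_outr //; case: ifP => //; lia.
by rewrite -getE padE !ltn_ord.
Qed.

Lemma get_pad_le m n m' n' (A : 'M[R]_(m, n)) i j :
  (m <= m')%N -> (n <= n')%N -> get (pad m' n' A) i j = get A i j.
Proof.
move=> h1 h2; rewrite get_pad; case: ifP => // /negbT; rewrite negb_and -!leqNgt.
by case/orP => h; [rewrite get_outl //; lia | rewrite get_outr //; lia].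
Qed.

Lemma get_row_mx m n1 n2 (A : 'M[R]_(m, n1)) (B : 'M[R]_(m, n2)) i j :
  get (row_mx A B) i j = if (j < n1)%N then get A i j else get B i (j - n1).
Proof.
rewrite /get; case: (ins m i) => [i'|]; last by case: ifP.
case: (ltnP j n1) => hj.
  by rewrite (ins_some (k := lshift n2 (Ordinal hj))) // (ins_some (k := Ordinal hj)) // row_mxEl.
case: (ltnP j (n1 + n2)) => hj2.
  have h : (j - n1 < n2)%N by lia.
  rewrite (ins_some (k := rshift n1 (Ordinal h))) /=; last by lia.
  by rewrite (ins_some (k := Ordinal h)) // row_mxEr.
by rewrite !ins_none //; lia.
Qed.

Lemma get_col_mx m1 m2 n (A : 'M[R]_(m1, n)) (B : 'M[R]_(m2, n)) i j :
  get (col_mx A B) i j = if (i < m1)%N then get A i j else get B (i - m1) j.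
Proof.
rewrite /get; case: (ltnP i m1) => hi.
  rewrite (ins_some (k := lshift m2 (Ordinal hi))) // (ins_some (k := Ordinal hi)) //.
  by case: (ins n j) => // j'; rewrite col_mxEu.
case: (ltnP i (m1 + m2)) => hi2.
  have h : (i - m1 < m2)%N by lia.
  rewrite (ins_some (k := rshift m1 (Ordinal h))) /=; last by lia.
  by rewrite (ins_some (k := Ordinal h)) //; case: (ins n j) => // j'; rewrite col_mxEd.
by rewrite !ins_none //; lia.
Qed.

Lemma get_block_mx m1 m2 n1 n2 (A : 'M[R]_(m1, n1)) (B : 'M[R]_(m1, n2))
   (C : 'M[R]_(m2, n1)) (D : 'M[R]_(m2, n2)) i j :
  get (block_mx A B C D) i j =
  if (i < m1)%N then (if (j < n1)%N then get A i j else get B i (j - n1))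
  else (if (j < n1)%N then get C (i - m1) j else get D (i - m1) (j - n1)).
Proof. by rewrite /block_mx get_col_mx !get_row_mx. Qed.

Lemma get_opp m n (A : 'M[R]_(m, n)) i j : get (- A) i j = - get A i j.
Proof. by rewrite /get; case: (ins m i) => [i'|]; case: (ins n j) => [j'|]; rewrite ?oppr0 ?mxE. Qed.

Lemma get_mul m n p (A : 'M[R]_(m, n)) (B : 'M[R]_(n, p)) i j :
  get (A *m B) i j = \sum_(k < n) get A i k * get B k j.
Proof.
rewrite /get; case: (ins m i) => [i'|]; last by rewrite big1 // => k; rewrite mul0r.
case: (ins p j) => [j'|]; last first.
  by rewrite big1 // => k _; case: (ins n (val k)) => [?|]; rewrite ?mulr0.
by rewrite mxE; apply: eq_bigr => k _; rewrite !insK.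
Qed.

Lemma matrix_get m n (A B : 'M[R]_(m, n)) :
  (forall i j, (i < m)%N -> (j < n)%N -> get A i j = get B i j) -> A = B.
Proof. by move=> h; apply/matrixP => i j; rewrite !getE h. Qed.

End Get.

Lemma get_map (R S : nzRingType) (f : R -> S) m n (A : 'M[R]_(m, n)) i j :
  f 0 = 0 -> get (map_mx f A) i j = f (get A i j).
Proof. by move=> f0; rewrite /get; case: (ins m i) => [i'|]; case: (ins n j) => [j'|]; rewrite ?mxE. Qed.


Section L0.
Variable R : numDomainType.

Lemma mcoeff_sum_delta n (p : {mpoly R[n]}) m :
  \sum_(m' <- msupp p) p@_m' * (m' == m)%:R = p@_m.
Proof.
rewrite [in RHS](mpolyE p) raddf_sum; apply: eq_bigr => m' _.
by rewrite /= mcoeffZ mcoeffX.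
Qed.

Definition resm n (m : 'X_{1..n.+1}) : 'X_{1..n} :=
  [multinom m (widen_ord (leqnSn n) i) | i < n].

Lemma mnm_split n (m m' : 'X_{1..n.+1}) :
  (m' == m) = (resm m' == resm m) && (m' ord_max == m ord_max).
Proof.
apply/eqP/andP => [->//|[/eqP e1 /eqP e2]].
apply/mnmP => j; case: (ltnP j n) => hj.
  have -> : j = widen_ord (leqnSn n) (Ordinal hj) by apply: val_inj.
  by have := congr1 (fun x : 'X_{1..n} => x (Ordinal hj)) e1; rewrite /resm !mnmE.
have -> : j = ord_max by apply: val_inj => /=; have := ltn_ord j; lia.
exact: e2.
Qed.

Lemma muni_coef n (p : {mpoly R[n.+1]}) m :
  p@_m = ((muni p)`_(m ord_max))@_(resm m).
Proof.
rewrite muniE coef_sum raddf_sum -mcoeff_sum_delta; apply: eq_bigr => m' _.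
rewrite /= coefZ coefXn [in RHS]mulr_natr mcoeffMn mcoeffZ mcoeffX mnm_split.
rewrite -/(resm m') (eq_sym (m ord_max)).
by case: (_ == _); case: (_ == _); rewrite ?mulr0 ?mulr1 ?mulr0n ?mulr1n.
Qed.

Lemma muni_eval n (p : {mpoly R[n.+1]}) v :
  p.@[v] = (map_poly (meval (fun i => v (widen_ord (leqnSn n) i))) (muni p)).[v ord_max].
Proof.
rewrite muniE raddf_sum horner_sum mevalE; apply: eq_bigr => m _.
rewrite /= -mul_polyC rmorphM /= map_polyC map_polyXn hornerCM hornerXn /= mevalZ mevalX -mulrA.
congr (_ * _); rewrite big_ord_recr /=; congr (_ * _).
by apply: eq_bigr => i _; rewrite mnmE.
Qed.

Lemma meval_eq0 n (p : {mpoly R[n]}) : (forall v, p.@[v] = 0) -> p = 0.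
Proof.
elim: n p => [|n IH] p H.
  have Hp : p = (p@_0%MM)%:MP.
    apply/mpolyP => m; have -> : m = 0%MM by apply/mnmP => -[].
    by rewrite mcoeffC eqxx mulr1.
  have e0 : p@_0%MM = 0 by rewrite -(H (fun _ => 0)) [in RHS]Hp mevalC.
  by rewrite Hp e0.
have Hc : forall k, (muni p)`_k = 0.
  move=> k; apply: IH => v'.
  set P := map_poly (meval v') (muni p).
  have -> : ((muni p)`_k).@[v'] = P`_k by rewrite coef_map.
  suff -> : P = 0 by rewrite coef0.
  have HP : forall x, P.[x] = 0.
    move=> x; pose v := fun j : 'I_n.+1 => if ins n (val j) is Some i then v' i else x.
    rewrite -(H v) muni_eval /P; congr (_.[_]).
      apply/polyP => i; rewrite !coef_map /=; apply: meval_eq => j.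
      by rewrite /v /= insK.
    by rewrite /v /= ins_none.
  apply: (@roots_geq_poly_eq0 _ _ [seq i%:R | i <- iota 0 (size P)]).
  - by apply/allP => x _; rewrite /root HP.
  - by rewrite map_inj_uniq ?iota_uniq // => a b /eqP; rewrite eqr_nat => /eqP.
  - by rewrite size_map size_iota.
apply/mpolyP => m; by rewrite mcoeff0 muni_coef Hc mcoeff0.
Qed.

End L0.


Section Eval.
Variable F : numClosedFieldType.

Lemma mpoly_eq_eval n (p q : {mpoly F[n]}) : (forall v, p.@[v] = q.@[v]) -> p = q.
Proof.
move=> h; apply/eqP; rewrite -subr_eq0; apply/eqP/meval_eq0 => v.
by rewrite mevalB h subrr.
Qed.

Lemma pullback_eval n N K (B : 'M[{mpoly F[n]}]_N) psi psib (p : {mpoly F[nv N K]}) v :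
  (pullback B psi psib p).@[v] =
  evalRep p (map_mx (meval v) B) (map_mx (meval v) psi) (map_mx (meval v) psib).
Proof.
rewrite /pullback comp_mpoly_meval /evalRep; apply: meval_eq => k.
by rewrite tnth_mktuple flat_map.
Qed.

Definition matB N K (v : 'I_(nv N K) -> F) : 'M[F]_N := \matrix_(i, j) v (iB K i j).
Definition matPsi N K (v : 'I_(nv N K) -> F) : 'M[F]_(N, K) := \matrix_(i, a) v (iPsi i a).
Definition matPsib N K (v : 'I_(nv N K) -> F) : 'M[F]_(K, N) := \matrix_(b, j) v (iPsib b j).

Lemma map_XB n N K (e : 'I_(nv N K) -> 'I_n) v :
  map_mx (meval v) (XB F e) = matB (fun k => v (e k)).
Proof. by apply/matrixP => i j; rewrite !mxE mevalXU. Qed.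
Lemma map_XPsi n N K (e : 'I_(nv N K) -> 'I_n) v :
  map_mx (meval v) (XPsi F e) = matPsi (fun k => v (e k)).
Proof. by apply/matrixP => i j; rewrite !mxE mevalXU. Qed.
Lemma map_XPsib n N K (e : 'I_(nv N K) -> 'I_n) v :
  map_mx (meval v) (XPsib F e) = matPsib (fun k => v (e k)).
Proof. by apply/matrixP => i j; rewrite !mxE mevalXU. Qed.

Lemma evalRep_flat N K (p : {mpoly F[nv N K]}) v :
  evalRep p (matB v) (matPsi v) (matPsib v) = p.@[v].
Proof. by rewrite /evalRep; apply: meval_eq => k; rewrite flat_eta. Qed.

Lemma matB_flat N K (B : 'M[F]_N) (psi : 'M[F]_(N, K)) psib :
  matB (flat B psi psib 0) = B.
Proof. by apply/matrixP => i j; rewrite mxE flat_iB. Qed.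
Lemma matPsi_flat N K (B : 'M[F]_N) (psi : 'M[F]_(N, K)) psib :
  matPsi (flat B psi psib 0) = psi.
Proof. by apply/matrixP => i j; rewrite mxE flat_iPsi. Qed.
Lemma matPsib_flat N K (B : 'M[F]_N) (psi : 'M[F]_(N, K)) psib :
  matPsib (flat B psi psib 0) = psib.
Proof. by apply/matrixP => i j; rewrite mxE flat_iPsib. Qed.

Lemma map_pad (R S : nzRingType) (f : {additive R -> S}) m n m' n' (A : 'M[R]_(m, n)) :
  map_mx f (pad m' n' A) = pad m' n' (map_mx f A).
Proof.
apply/matrixP => i j; rewrite !getE get_map ?raddf0 // !get_pad.
by case: ifP; rewrite ?raddf0 // get_map ?raddf0.
Qed.

Lemma pad_pad (R : nzRingType) m n m' n' m'' n'' (A : 'M[R]_(m, n)) :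
  (m <= m')%N -> (n <= n')%N -> (m' <= m'')%N -> (n' <= n'')%N ->
  pad m'' n'' (pad m' n' A) = pad m'' n'' A.
Proof.
move=> h1 h2 h3 h4; apply/matrixP => i j.
by rewrite !getE !get_pad_le //; lia.
Qed.

Lemma iota_pb_eval N N' K (p : {mpoly F[nv N' K]}) v :
  (iota_pb N N' K p).@[v] =
  evalRep p (pad N' N' (matB v)) (pad N' K (matPsi v)) (pad K N' (matPsib v)).
Proof.
by rewrite /iota_pb pullback_eval !map_pad map_XB map_XPsi map_XPsib.
Qed.

Lemma part1 K N N' N'' : (N <= N')%N -> (N' <= N'')%N ->
  forall p : {mpoly F[nv N'' K]},
       iota_pb N N' K (iota_pb N' N'' K p) = iota_pb N N'' K p.
Proof.
move=> h1 h2 p; apply: mpoly_eq_eval => v.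
rewrite iota_pb_eval [X in _ = X]iota_pb_eval {1}/evalRep iota_pb_eval.
by rewrite matB_flat matPsi_flat matPsib_flat !pad_pad.
Qed.
End Eval.


Lemma mderivXU (R : comNzRingType) n (i k : 'I_n) :
  ('X_i : {mpoly R[n]})^`M(k) = (i == k)%:R.
Proof.
rewrite mderivX mnm1E; case: eqP => [->|_]; last by rewrite scale0r.
by rewrite (_ : (U_(k) - U_(k))%MM = 0%MM) ?mpolyX0 ?scale1r //; apply/mnmP => j; rewrite mnmBE mnm0E subnn.
Qed.

Section Chain.
Variables (R : comNzRingType) (n n' : nat) (t : n'.-tuple {mpoly R[n]}) (x : 'I_n).

Definition D1 (p : {mpoly R[n']}) := (p \mPo t)^`M(x).
Definition D2 (p : {mpoly R[n']}) := \sum_(k < n') (p^`M(k) \mPo t) * (tnth t k)^`M(x).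
Definition Qc p := D1 p = D2 p.

Lemma QcD p q : Qc p -> Qc q -> Qc (p + q).
Proof.
rewrite /Qc /D1 => Hp Hq; rewrite raddfD /= mderivD Hp Hq /D2 -big_split /=.
by apply: eq_bigr => k _; rewrite mderivD raddfD mulrDl.
Qed.

Lemma QcM p q : Qc p -> Qc q -> Qc (p * q).
Proof.
rewrite /Qc /D1 => Hp Hq; rewrite rmorphM /= mderivM Hp Hq /D2.
rewrite mulr_suml mulr_sumr -big_split /=; apply: eq_bigr => k _.
rewrite mderivM raddfD /= !rmorphM /=; ring.
Qed.

Lemma QcC c : Qc c%:MP.
Proof.
rewrite /Qc /D1 /D2 comp_mpolyC mderivC big1 // => k _.
by rewrite mderivC comp_mpolyC mul0r.
Qed.

Lemma QcX i : Qc 'X_i.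
Proof.
rewrite /Qc /D1 /D2 comp_mpolyXU -tnth_nth (bigD1 i) //= big1 ?addr0.
  by rewrite mderivXU eqxx rmorph1 mul1r.
by move=> k hk; rewrite mderivXU eq_sym (negbTE hk) rmorph0 mul0r.
Qed.

Lemma Qc1 : Qc 1.
Proof. by rewrite -mpolyC1; exact: QcC. Qed.

Lemma Qc_all p : Qc p.
Proof.
rewrite [p]mpolyE; apply: (big_ind Qc); [|exact: QcD|].
  by rewrite -(mpolyC0 _ R); exact: QcC.
move=> m _; rewrite -mul_mpolyC; apply: QcM; first exact: QcC.
rewrite mpolyXE_id; apply: (big_ind Qc); [exact: Qc1|exact: QcM|].
move=> i _; elim: (m i) => [|e IH]; first by rewrite expr0; exact: Qc1.
by rewrite exprS; apply: QcM => //; exact: QcX.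
Qed.

End Chain.


Definition hX (R : nzRingType) n (o : option 'I_n) : {mpoly R[n]} :=
  if o is Some y then 'X_y else 0.

Lemma chain_spec (R : comNzRingType) n n' (e : 'I_n' -> option 'I_n) (phi : 'I_n -> 'I_n')
  (t : n'.-tuple {mpoly R[n]}) :
  (forall x, e (phi x) = Some x) -> (forall k x, e k = Some x -> k = phi x) ->
  (forall k, tnth t k = hX R (e k)) ->
  forall (p : {mpoly R[n']}) x, (p \mPo t)^`M(x) = p^`M(phi x) \mPo t.
Proof.
move=> e1 e2 ht p x; have := Qc_all t x p; rewrite /Qc /D1 /D2 => ->.
rewrite (bigD1 (phi x)) //= big1 ?addr0.
  by rewrite ht e1 /= mderivXU eqxx mulr1.
move=> k hk; rewrite ht; case E: (e k) => [y|] /=; last by rewrite mderiv0 mulr0.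
rewrite mderivXU; case: eqP => [ey|_]; last by rewrite mulr0.
by move: hk; rewrite (e2 _ _ E) ey eqxx.
Qed.

Definition wsum n (w : 'I_n -> nat) (m : 'X_{1..n}) : nat := (\sum_(j < n) m j * w j)%N.

Lemma vanish (R : comNzRingType) n n' (t : n'.-tuple {mpoly R[n]}) (outer : pred 'I_n')
  (wp wn : 'I_n' -> nat) (p : {mpoly R[n']}) k :
  (forall j, outer j -> tnth t j = 0) ->
  (forall j, ~~ outer j -> wp j = 0%N /\ wn j = 0%N) ->
  (forall m, p@_m != 0 -> wsum wp m = wsum wn m) ->
  outer k -> wp k != wn k -> p^`M(k) \mPo t = 0.
Proof.
move=> ht hin hbal ok hk.
rewrite {1}(mpolyE p) (raddf_sum (mderiv k)) raddf_sum /= big1_seq // => m /andP[_ hm].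
rewrite mderivZ mderivX linearZ linearZ /= comp_mpolyX.
case: (posnP (m k)) => [->|mk]; first by rewrite scale0r scaler0.
case: (boolP [exists j, outer j && (0 < (m - U_(k))%MM j)%N]).
  case/existsP => j /andP[oj pj].
  rewrite (bigD1 j) //= ht // expr0n; move: pj; case: eqP => [->//|_ _].
  by rewrite mul0r !scaler0.
move/existsPn => hno; exfalso.
have key : forall w : 'I_n' -> nat, (forall j, ~~ outer j -> w j = 0%N) -> wsum w m = w k.
  move=> w hw; rewrite /wsum (bigD1 k) //= big1.
    have := hno k; rewrite ok /= mnmBE mnm1E eqxx -leqNgt => h.
    have -> : m k = 1%N by lia.
    by rewrite mul1n addn0.
  move=> j hj; case: (boolP (outer j)) => oj; last by rewrite hw // muln0.
  have := hno j; rewrite oj /= mnmBE mnm1E eq_sym (negbTE hj) subn0.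
  by rewrite -leqNgt leqn0 => /eqP ->.
move: hk; rewrite -(key wp) -?(key wn); first by rewrite hbal ?eqxx // -mcoeff_msupp.
  by move=> j /hin [].
by move=> j /hin [].
Qed.


Section Iota.
Variables (F : numClosedFieldType) (N N' K : nat).
Hypothesis le : (N <= N')%N.

Definition eI : 'I_(nv N' K) -> option 'I_(nv N K) :=
  flat (\matrix_(i < N', j < N')
          match ins N i, ins N j with Some i', Some j' => Some (iB K i' j') | _, _ => None end)
       (\matrix_(i < N', a < K) if ins N i is Some i' then Some (iPsi i' a) else None)
       (\matrix_(b < K, j < N') if ins N j is Some j' then Some (iPsib b j') else None) 0.

Definition phiI : 'I_(nv N K) -> 'I_(nv N' K) :=
  flat (\matrix_(i, j) iB K (widen_ord le i) (widen_ord le j))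
       (\matrix_(i, a) iPsi (widen_ord le i) a)
       (\matrix_(b, j) iPsib b (widen_ord le j)) 0.

Lemma phiI_iB i j : phiI (iB K i j) = iB K (widen_ord le i) (widen_ord le j).
Proof. by rewrite /phiI flat_iB mxE. Qed.
Lemma phiI_iPsi i a : phiI (iPsi i a) = iPsi (widen_ord le i) a.
Proof. by rewrite /phiI flat_iPsi mxE. Qed.
Lemma phiI_iPsib b j : phiI (iPsib b j) = iPsib b (widen_ord le j).
Proof. by rewrite /phiI flat_iPsib mxE. Qed.

Lemma eI_phi x : eI (phiI x) = Some x.
Proof.
by case: (flatP x) => *; rewrite /phiI ?(flat_iB, flat_iPsi, flat_iPsib) mxE /eI
   ?(flat_iB, flat_iPsi, flat_iPsib) mxE /= !insK.
Qed.

Lemma eI_inv k x : eI k = Some x -> k = phiI x.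
Proof.
case: (flatP k) => [i j|i a|b j]; rewrite /eI ?(flat_iB, flat_iPsi, flat_iPsib) mxE.
- case: (insP N i) => [[i' Ei ->]|[_ ->]] //; case: (insP N j) => [[j' Ej ->]|[_ ->]] //.
  case=> <-; rewrite /phiI flat_iB mxE; congr iB; apply: val_inj => //.
- case: (insP N i) => [[i' Ei ->]|[_ ->]] //.
  case=> <-; rewrite /phiI flat_iPsi mxE; congr iPsi; apply: val_inj => //.
- case: (insP N j) => [[j' Ej ->]|[_ ->]] //.
  case=> <-; rewrite /phiI flat_iPsib mxE; congr iPsib; apply: val_inj => //.
Qed.

Definition tI : (nv N' K).-tuple {mpoly F[nv N K]} :=
  mktuple (fun k => flat (iotaB N' (XB F (@id _))) (iotaPsi N' (XPsi F (@id _)))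
                         (iotaPsib N' (XPsib F (@id _))) 0 k).

Lemma iota_pbE (p : {mpoly F[nv N' K]}) : iota_pb N N' K p = p \mPo tI.
Proof. by []. Qed.

Lemma tIE k : tnth tI k = hX F (eI k).
Proof.
rewrite tnth_mktuple; case: (flatP k) => [i j|i a|b j];
  rewrite ?(flat_iB, flat_iPsi, flat_iPsib) /eI ?(flat_iB, flat_iPsi, flat_iPsib) ?mxE /ins ?valK.
- by case: insub => [i'|] //; case: insub => [j'|] //=; rewrite ?mxE.
- by case: insub => [i'|] //=; rewrite ?mxE.
- by case: insub => [j'|] //=; rewrite ?mxE.
Qed.

Lemma chainI (p : {mpoly F[nv N' K]}) x :
  (iota_pb N N' K p)^`M(x) = iota_pb N N' K (p^`M(phiI x)).
Proof. exact: (chain_spec eI_phi eI_inv tIE). Qed.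

Definition wpI : 'I_(nv N' K) -> nat :=
  flat (\matrix_(i < N', j < N') ((N <= i)%N : nat)) (\matrix_(i < N', a < K) ((N <= i)%N : nat))
       (\matrix_(b < K, j < N') 0%N) 0.
Definition wnI : 'I_(nv N' K) -> nat :=
  flat (\matrix_(i < N', j < N') ((N <= j)%N : nat)) (\matrix_(i < N', a < K) 0%N)
       (\matrix_(b < K, j < N') ((N <= j)%N : nat)) 0.

Lemma nleN (i : 'I_N) : (N <= i)%N = false.
Proof. by rewrite leqNgt ltn_ord. Qed.

Lemma inner_w j : ~~ (eI j == None) -> wpI j = 0%N /\ wnI j = 0%N.
Proof.
case E: (eI j) => [x|] // _; rewrite (eI_inv E).
case: (flatP x) => *; rewrite ?(phiI_iB, phiI_iPsi, phiI_iPsib) /wpI /wnI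
  !(flat_iB, flat_iPsi, flat_iPsib) !mxE /= ?nleN. all: done.
Qed.

Lemma balance (p : {mpoly F[nv N' K]}) : gl_invariant p ->
  forall m, p@_m != 0 -> wsum wpI m = wsum wnI m.
Proof.
move=> inv m pm.
pose c := fun i : 'I_N' => (2:F) ^+ (N <= i).
have cnz : forall i, c i != 0 by move=> i; rewrite expf_neq0 // pnatr_eq0.
pose g := diag_mx (\row_i c i); pose g' := diag_mx (\row_i (c i)^-1).
have gg' : g *m g' = 1%:M.
  apply/matrixP => i j; rewrite mul_diag_mx !mxE; case: eqP => [->|_].
    by rewrite mulr1n mulfV.
  by rewrite mulr0n mulr0.
have gu : g \in unitmx := (mulmx1_unit gg').1.
have ig : invmx g = g'.
  by rewrite -[invmx g]mul1mx -(mulmx1C gg') -mulmxA mulmxV // mulmx1.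
pose cw := fun k => (2:F) ^+ (wpI k) / 2 ^+ (wnI k).
pose s := [tuple cw k *: 'X_k | k < nv N' K].
have Hs : p \mPo s = p.
  apply: mpoly_eq_eval => v; rewrite comp_mpoly_meval.
  transitivity (evalRep p (g *m matB v *m invmx g) (g *m matPsi v) (matPsib v *m invmx g));
    last by rewrite inv // evalRep_flat.
  rewrite /evalRep; apply: meval_eq => k; rewrite tnth_mktuple mevalZ mevalXU ig.
  case: (flatP k) => [i j|i a|b j];
    rewrite /cw /wpI /wnI !(flat_iB, flat_iPsi, flat_iPsib) ?mul_diag_mx ?mul_mx_diag !mxE /c.
  - by rewrite mulrAC.
  - by rewrite expr0 invr1 mulr1.
  - by rewrite expr0 mul1r mulrC.
have Hc : (p \mPo s)@_m = p@_m * \prod_k cw k ^+ m k.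
  rewrite comp_mpolyEX raddf_sum /=.
  have E : forall m', 'X_[m'] \mPo s = (\prod_k cw k ^+ m' k) *: 'X_[m'].
    move=> m'; rewrite comp_mpolyX [in RHS]mpolyXE_id -scaler_prod.
    by apply: eq_bigr => k _; rewrite tnth_mktuple exprZn.
  rewrite (bigD1_seq m) ?msupp_uniq ?mcoeff_msupp //= big1 ?addr0.
    by rewrite E !mcoeffZ mcoeffX eqxx mulr1.
  by move=> m' hm'; rewrite E !mcoeffZ mcoeffX (negbTE hm') !mulr0.
have H1 : \prod_k cw k ^+ m k = 1.
  by apply: (mulfI pm); rewrite -Hc Hs mulr1.
move: H1; rewrite /cw.
under eq_bigr do rewrite exprMn exprVn -!exprM.
rewrite prodf_div !prodrXr => /divr1_eq /eqP.
rewrite -!natrX eqr_nat => /eqP /expnI -/(_ isT).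
rewrite /wsum => E; rewrite (eq_bigr (fun k => (wpI k * m k)%N)) ?E //.
  by apply: eq_bigr => k _; rewrite mulnC.
by move=> k _; rewrite mulnC.
Qed.

End Iota.


Lemma sum_narrow (V : nmodType) n1 n2 (le : (n1 <= n2)%N) (G : 'I_n2 -> V) :
  (forall i : 'I_n2, (n1 <= i)%N -> G i = 0) ->
  \sum_(i < n2) G i = \sum_(i < n1) G (widen_ord le i).
Proof.
move=> h; rewrite (bigID (fun i : 'I_n2 => (i < n1)%N)) /= [X in _ + X]big1 ?addr0.
  exact: big_ord_narrow.
by move=> i; rewrite -leqNgt; exact: h.
Qed.

Lemma sum4_narrow (V : nmodType) n1 n2 (le : (n1 <= n2)%N) (S : 'I_n2 -> 'I_n2 -> 'I_n2 -> 'I_n2 -> V) :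
  (forall m n p q : 'I_n2, ~~ [&& (m < n1)%N, (n < n1)%N, (p < n1)%N & (q < n1)%N] -> S m n p q = 0) ->
  \sum_(m < n2) \sum_(n < n2) \sum_(p < n2) \sum_(q < n2) S m n p q =
  \sum_(m < n1) \sum_(n < n1) \sum_(p < n1) \sum_(q < n1)
     S (widen_ord le m) (widen_ord le n) (widen_ord le p) (widen_ord le q).
Proof.
move=> h; rewrite (sum_narrow le); last first.
  move=> m hm; rewrite big1 // => n _; rewrite big1 // => p _; rewrite big1 // => q _.
  by apply: h; apply/negP => /and4P[]; lia.
apply: eq_bigr => m _; rewrite (sum_narrow le); last first.
  move=> n hn; rewrite big1 // => p _; rewrite big1 // => q _.
  by apply: h; apply/negP => /and4P[]; lia.
apply: eq_bigr => n _; rewrite (sum_narrow le); last first.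
  move=> p hp; rewrite big1 // => q _.
  by apply: h; apply/negP => /and4P[]; lia.
apply: eq_bigr => p _; rewrite (sum_narrow le) // => q hq.
by apply: h; apply/negP => /and4P[]; lia.
Qed.

Definition pbr (F : numClosedFieldType) (N K : nat) (f g : {mpoly F[nv N K]}) : {mpoly F[nv N K]} :=
  \sum_(i < N) \sum_(a < K)
     (f^`M(iPsi i a) * g^`M(iPsib a i) - f^`M(iPsib a i) * g^`M(iPsi i a))
  + \sum_(m < N) \sum_(n < N) \sum_(p < N) \sum_(q < N)
     f^`M(iB K m n) * g^`M(iB K p q) *
     ((n == p)%:R * \sum_(a < K) 'X_(iPsib a q) * 'X_(iPsi m a)
      - (m == q)%:R * \sum_(a < K) 'X_(iPsib a n) * 'X_(iPsi p a)).

Lemma pbracketE (F : numClosedFieldType) (N K : nat) (f g : {mpoly F[nv N K]}) :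
  pbracket f g = pbr f g.
Proof.
rewrite /pbracket /pbr; congr (_ + _).
do 4!(apply: eq_bigr => ? _); congr (_ * (_ * _ - _ * _)); apply: eq_bigr => a _; by rewrite !mxE.
Qed.


Lemma get_zero (R : nzRingType) m n (A : 'M[R]_(m, n)) i j :
  (m <= i)%N || (n <= j)%N -> get A i j = 0.
Proof. by case/orP => h; [rewrite get_outl | rewrite get_outr]. Qed.

Lemma pad_mul (R : nzRingType) m n K (A : 'M[R]_(m, K)) (B : 'M[R]_(K, n)) m' n' :
  (m <= m')%N -> (n <= n')%N ->
  pad m' K A *m pad K n' B = pad m' n' (A *m B).
Proof.
move=> h1 h2; apply/matrixP => i j; rewrite !getE get_mul get_pad_le // get_mul.
by apply: eq_bigr => k _; rewrite !get_pad_le.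
Qed.

Ltac zg := repeat match goal with |- context [get ?A ?i ?j] =>
  rewrite (@get_zero _ _ _ A i j); [|lia] end.

Section Part3.
Variables (F : numClosedFieldType) (K N1 N2 N1' N2' : nat).
Hypotheses (h1 : (N1 <= N1')%N) (h2 : (N2 <= N2')%N).

Definition sn (i : nat) : nat :=
  if (i < N1)%N then i else if (i < N1')%N then (i + N2)%N
  else if (i < N1' + N2)%N then (i - (N1' - N1))%N else i.

Lemma sn_cases i :
  [\/ (i < N1)%N /\ sn i = i, (N1 <= i < N1')%N /\ sn i = (i + N2)%N,
      (N1' <= i < N1' + N2)%N /\ sn i = (i - (N1' - N1))%N
    | (N1' + N2 <= i)%N /\ sn i = i].
Proof.
rewrite /sn; case: ifP => a; first by constructor 1.
case: ifP => b; first by constructor 2; split => //; lia.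
case: ifP => c; first by constructor 3; split => //; lia.
by constructor 4; split => //; lia.
Qed.

Lemma sn_lt (i : 'I_(N1' + N2')) : (sn i < N1' + N2')%N.
Proof. by have := ltn_ord i; case: (sn_cases i) => -[? ->]; lia. Qed.

Definition sfun (i : 'I_(N1' + N2')) : 'I_(N1' + N2') := Ordinal (sn_lt i).

Lemma sfun_inj : injective sfun.
Proof.
move=> i j /(congr1 val) /= e; apply: val_inj => /=.
by case: (sn_cases i) => -[? E1]; case: (sn_cases j) => -[? E2]; rewrite E1 E2 in e; lia.
Qed.

Definition sig := perm sfun_inj.

Lemma sigE i : val (sig i) = sn i.
Proof. by rewrite permE. Qed.

Lemma invmx_perm n (s : 'S_n) : invmx (perm_mx s : 'M[F]_n) = perm_mx s^-1.
Proof.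
have u := unitmx_perm F s.
rewrite -[invmx _]mul1mx -(perm_mx1 F n) -(mulVg s) perm_mxM -mulmxA mulmxV //.
by rewrite mulmx1.
Qed.

Ltac fin := repeat (case: ifP => ?); try (exfalso; lia); zg;
  rewrite ?oppr0 //; try (congr (get _ _ _); lia); try (congr (- get _ _ _); lia).

Lemma part3F (p : {mpoly F[nv (N1' + N2') K]}) : gl_invariant p ->
  forall (B1 : 'M[F]_N1) (psi1 : 'M[F]_(N1, K)) (psib1 : 'M[F]_(K, N1))
    (B2 : 'M[F]_N2) (psi2 : 'M[F]_(N2, K)) (psib2 : 'M[F]_(K, N2)),
  evalRep p (mB (pad N1' N1' B1) (pad N1' K psi1) (pad K N1' psib1)
                (pad N2' N2' B2) (pad N2' K psi2) (pad K N2' psib2))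
            (mPsi (pad N1' K psi1) (pad N2' K psi2))
            (mPsib (pad K N1' psib1) (pad K N2' psib2))
  = evalRep p (pad (N1' + N2') (N1' + N2') (mB B1 psi1 psib1 B2 psi2 psib2))
            (pad (N1' + N2') K (mPsi psi1 psi2))
            (pad K (N1' + N2') (mPsib psib1 psib2)).
Proof.
move=> inv B1 psi1 psib1 B2 psi2 psib2.
rewrite -[RHS](inv (perm_mx sig) (unitmx_perm F sig)) invmx_perm.
rewrite -row_permE -col_permE -row_permE -col_permE.
congr evalRep; apply/matrixP => i j.
- rewrite [RHS]mxE [RHS]mxE !getE !sigE /mB !pad_mul // get_pad_le; last 2 first; [lia|lia|].
  rewrite !get_block_mx !get_opp !get_pad_le //.
  have := ltn_ord i; have := ltn_ord j.
  by case: (sn_cases i) => -[? ->]; case: (sn_cases j) => -[? ->] ? ?; fin.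
- rewrite [RHS]mxE !getE !sigE /mPsi get_pad_le; last 2 first; [lia|lia|].
  rewrite !get_col_mx !get_pad_le //.
  have := ltn_ord i; by case: (sn_cases i) => -[? ->] ?; fin.
- rewrite [RHS]mxE !getE !sigE /mPsib get_pad_le; last 2 first; [lia|lia|].
  rewrite !get_row_mx !get_pad_le //.
  have := ltn_ord j; by case: (sn_cases j) => -[? ->] ?; fin.
Qed.

End Part3.


Lemma map_mB (R S : nzRingType) (f : {rmorphism R -> S}) N1 N2 K
  (B1 : 'M[R]_N1) (psi1 : 'M[R]_(N1, K)) (psib1 : 'M[R]_(K, N1))
  (B2 : 'M[R]_N2) (psi2 : 'M[R]_(N2, K)) (psib2 : 'M[R]_(K, N2)) :
  map_mx f (mB B1 psi1 psib1 B2 psi2 psib2) =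
  mB (map_mx f B1) (map_mx f psi1) (map_mx f psib1) (map_mx f B2) (map_mx f psi2) (map_mx f psib2).
Proof. by rewrite /mB map_block_mx map_mxN !map_mxM. Qed.

Lemma part3 (F : numClosedFieldType) (K : nat) :
  (forall (N1 N2 N1' N2' : nat), (N1 <= N1')%N -> (N2 <= N2')%N ->
     forall p : {mpoly F[nv (N1' + N2') K]}, gl_invariant p ->
       let e1 := @lshift (nv N1 K) (nv N2 K) in
       let e2 := @rshift (nv N1 K) (nv N2 K) in
       let B1 := XB F e1 in let psi1 := XPsi F e1 in let psib1 := XPsib F e1 in
       let B2 := XB F e2 in let psi2 := XPsi F e2 in let psib2 := XPsib F e2 in
       pullback
         (mB (iotaB N1' B1) (iotaPsi N1' psi1) (iotaPsib N1' psib1)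
             (iotaB N2' B2) (iotaPsi N2' psi2) (iotaPsib N2' psib2))
         (mPsi (iotaPsi N1' psi1) (iotaPsi N2' psi2))
         (mPsib (iotaPsib N1' psib1) (iotaPsib N2' psib2)) p
       =
       pullback
         (iotaB (N1' + N2') (mB B1 psi1 psib1 B2 psi2 psib2))
         (iotaPsi (N1' + N2') (mPsi psi1 psi2))
         (iotaPsib (N1' + N2') (mPsib psib1 psib2)) p).
Proof.
move=> N1 N2 N1' N2' h1 h2 p inv e1 e2 B1 psi1 psib1 B2 psi2 psib2.
apply: mpoly_eq_eval => v; rewrite !pullback_eval.
rewrite /iotaB /iotaPsi /iotaPsib /mPsi /mPsib !map_mB !map_col_mx !map_row_mx !map_pad map_mB.
rewrite !map_col_mx !map_row_mx /B1 /psi1 /psib1 /B2 /psi2 /psib2 !map_XB !map_XPsi !map_XPsib.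
exact: part3F.
Qed.


Section Part2.
Variables (F : numClosedFieldType) (N N' K : nat).
Hypothesis le : (N <= N')%N.

Local Notation eI := (@eI N N' K).
Local Notation tI := (@tI F N N' K).
Local Notation wpI := (@wpI N N' K).
Local Notation wnI := (@wnI N N' K).

Lemma chainT (p : {mpoly F[nv N' K]}) x : (p \mPo tI)^`M(x) = p^`M(phiI le x) \mPo tI.
Proof. exact: chainI. Qed.

Lemma iotaX k : ('X_k : {mpoly F[nv N' K]}) \mPo tI = hX F (eI k).
Proof. by rewrite comp_mpolyXU -tnth_nth tIE. Qed.

Lemma hX_Psi_out (i : 'I_N') a : (N <= i)%N -> hX F (eI (iPsi i a)) = 0.
Proof. by move=> h; rewrite /eI flat_iPsi mxE ins_none. Qed.
Lemma hX_Psib_out (i : 'I_N') a : (N <= i)%N -> hX F (eI (iPsib a i)) = 0.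
Proof. by move=> h; rewrite /eI flat_iPsib mxE ins_none. Qed.
Lemma hX_Psi_w (i : 'I_N) a : hX F (eI (iPsi (widen_ord le i) a)) = 'X_(iPsi i a).
Proof. by rewrite /eI flat_iPsi mxE /= insK. Qed.
Lemma hX_Psib_w (i : 'I_N) a : hX F (eI (iPsib a (widen_ord le i))) = 'X_(iPsib a i).
Proof. by rewrite /eI flat_iPsib mxE /= insK. Qed.

Lemma eI_B_none (m n : 'I_N') : (N <= m)%N || (N <= n)%N -> eI (iB K m n) = None.
Proof.
rewrite /eI flat_iB mxE; case/orP => h; first by rewrite ins_none.
by rewrite (ins_none h); case: ins.
Qed.
Lemma eI_Psi_none (i : 'I_N') a : (N <= i)%N -> eI (iPsi i a) = None.
Proof. by move=> h; rewrite /eI flat_iPsi mxE ins_none. Qed.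
Lemma eI_Psib_none (i : 'I_N') a : (N <= i)%N -> eI (iPsib a i) = None.
Proof. by move=> h; rewrite /eI flat_iPsib mxE ins_none. Qed.

Lemma wB m n : wpI (iB K m n) = (N <= m)%N /\ wnI (iB K m n) = (N <= n)%N.
Proof. by rewrite /wpI /wnI !flat_iB !mxE. Qed.
Lemma wPsi i a : wpI (iPsi i a) = (N <= i)%N /\ wnI (iPsi i a) = 0%N.
Proof. by rewrite /wpI /wnI !flat_iPsi !mxE. Qed.
Lemma wPsib i a : wpI (iPsib a i) = 0%N /\ wnI (iPsib a i) = (N <= i)%N.
Proof. by rewrite /wpI /wnI !flat_iPsib !mxE. Qed.

Lemma vanI (f : {mpoly F[nv N' K]}) : gl_invariant f -> forall k,
  eI k = None -> wpI k != wnI k -> f^`M(k) \mPo tI = 0.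
Proof.
move=> inv k hk hw.
apply: (@vanish _ _ _ tI (fun j => eI j == None) wpI wnI) => //.
- by move=> j /eqP hj; rewrite tIE hj.
- by move=> j hj; apply: (inner_w le).
- exact: balance.
- by rewrite hk.
Qed.

Lemma sumX_comp (u w : 'I_K -> 'I_(nv N' K)) :
  (\sum_(a < K) 'X_(u a) * 'X_(w a)) \mPo tI = \sum_(a < K) hX F (eI (u a)) * hX F (eI (w a)).
Proof. by rewrite rmorph_sum; apply: eq_bigr => a _; rewrite rmorphM /= !iotaX. Qed.

Lemma weq (n p : 'I_N) : (widen_ord le n == widen_ord le p) = (n == p).
Proof. by apply/eqP/eqP => [h|->] //; apply: val_inj; exact: (congr1 val h). Qed.

Lemma part2 (f g : {mpoly F[nv N' K]}) : gl_invariant f -> gl_invariant g ->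
  iota_pb N N' K (pbracket f g) = pbracket (iota_pb N N' K f) (iota_pb N N' K g).
Proof.
move=> invf invg; rewrite !iota_pbE !pbracketE /pbr rmorphD; congr (_ + _).
  rewrite rmorph_sum (sum_narrow le) => [|i hi].
    apply: eq_bigr => i _; rewrite rmorph_sum; apply: eq_bigr => a _.
    by rewrite rmorphB !rmorphM /= !chainT phiI_iPsi phiI_iPsib.
  rewrite rmorph_sum big1 // => a _; rewrite rmorphB !rmorphM /=.
  rewrite (vanI invf (eI_Psi_none a hi)); last by case: (wPsi i a) => -> ->; rewrite hi.
  rewrite (vanI invf (eI_Psib_none a hi)); last by case: (wPsib i a) => -> ->; rewrite hi.
  by rewrite !mul0r subrr.
have push : forall (S : 'I_N' -> 'I_N' -> 'I_N' -> 'I_N' -> {mpoly F[nv N' K]}),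
   (\sum_(m < N') \sum_(n < N') \sum_(p < N') \sum_(q < N') S m n p q) \mPo tI =
   \sum_(m < N') \sum_(n < N') \sum_(p < N') \sum_(q < N') (S m n p q \mPo tI).
  move=> S; rewrite rmorph_sum; apply: eq_bigr => m _; rewrite rmorph_sum; apply: eq_bigr => n _.
  by rewrite rmorph_sum; apply: eq_bigr => p _; rewrite rmorph_sum.
rewrite rmorph_sum.
under eq_bigr => m0 _ do (rewrite rmorph_sum; under eq_bigr => n0 _ do (rewrite rmorph_sum;
  under eq_bigr => p0 _ do rewrite rmorph_sum)).
rewrite (sum4_narrow le) => [|m n p q hall].
  apply: eq_bigr => m _.
  apply: eq_bigr => n _.
  apply: eq_bigr => p _.
  apply: eq_bigr => q _.
  rewrite !rmorphM rmorphB !rmorphM /= !rmorph_nat !sumX_comp.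
  congr (_ * _ * (_ * _ - _ * _)).
  all: try by rewrite chainT phiI_iB.
  all: try by rewrite weq.
  1-2: by apply: eq_bigr => a _; rewrite hX_Psi_w hX_Psib_w.
rewrite !rmorphM rmorphB !rmorphM /= !rmorph_nat !sumX_comp mulrBr.
have T1 : (f^`M(iB K m n) \mPo tI) * (g^`M(iB K p q) \mPo tI) *
   ((n == p)%:R * \sum_(a < K) (hX F (eI (iPsib a q)) * hX F (eI (iPsi m a)))) = 0.
  case: (leqP N m) => hm.
    by rewrite big1 ?mulr0 // => a _; rewrite hX_Psi_out ?mulr0.
  case: (leqP N q) => hq.
    by rewrite big1 ?mulr0 // => a _; rewrite hX_Psib_out ?mul0r.
  case: eqP => [enp|]; last by rewrite mul0r mulr0.
  rewrite (vanI invf (eI_B_none _)) ?mul0r //.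
    by move: hall; rewrite -enp; lia.
  case: (wB m n) => -> ->; move: hall; rewrite -enp; case: (leqP N n); lia.
have T2 : (f^`M(iB K m n) \mPo tI) * (g^`M(iB K p q) \mPo tI) *
   ((m == q)%:R * \sum_(a < K) (hX F (eI (iPsib a n)) * hX F (eI (iPsi p a)))) = 0.
  case: (leqP N n) => hn.
    by rewrite big1 ?mulr0 // => a _; rewrite hX_Psib_out ?mul0r.
  case: (leqP N p) => hp.
    by rewrite big1 ?mulr0 // => a _; rewrite hX_Psi_out ?mulr0.
  case: eqP => [emq|]; last by rewrite mul0r mulr0.
  have hm : (N <= m)%N.
    by move: hall; rewrite -emq; lia.
  rewrite (vanI invf (eI_B_none _)) ?mul0r //; first by rewrite hm.
  by case: (wB m n) => -> ->; rewrite hm; case: (leqP N n); lia.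
by rewrite T1 T2 subrr.
Qed.

End Part2.

Theorem mainTheorem11 (F : numClosedFieldType) (K : nat) :
  (* (1) iota_{N',N''} o iota_{N,N'} = iota_{N,N''} on M(N,K) *)
  (forall (N N' N'' : nat), (N < N')%N -> (N' < N'')%N ->
     forall p : {mpoly F[nv N'' K]}, gl_invariant p ->
       iota_pb N N' K (iota_pb N' N'' K p) = iota_pb N N'' K p)
  /\
  (* (2) iota_{N,N'} is Poisson *)
  (forall (N N' : nat), (N < N')%N ->
     forall f g : {mpoly F[nv N' K]}, gl_invariant f -> gl_invariant g ->
       iota_pb N N' K (pbracket f g) = pbracket (iota_pb N N' K f) (iota_pb N N' K g))
  /\
  (* (3) m_{N1',N2'} o (iota_{N1,N1'} x iota_{N2,N2'})
         = iota_{N1+N2,N1'+N2'} o m_{N1,N2}  on M(N1,K) x M(N2,K) *)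
  (forall (N1 N2 N1' N2' : nat), (N1 <= N1')%N -> (N2 <= N2')%N ->
     forall p : {mpoly F[nv (N1' + N2') K]}, gl_invariant p ->
       let e1 := @lshift (nv N1 K) (nv N2 K) in
       let e2 := @rshift (nv N1 K) (nv N2 K) in
       let B1 := XB F e1 in let psi1 := XPsi F e1 in let psib1 := XPsib F e1 in
       let B2 := XB F e2 in let psi2 := XPsi F e2 in let psib2 := XPsib F e2 in
       pullback
         (mB (iotaB N1' B1) (iotaPsi N1' psi1) (iotaPsib N1' psib1)
             (iotaB N2' B2) (iotaPsi N2' psi2) (iotaPsib N2' psib2))
         (mPsi (iotaPsi N1' psi1) (iotaPsi N2' psi2))
         (mPsib (iotaPsib N1' psib1) (iotaPsib N2' psib2)) p
       =
       pullback
         (iotaB (N1' + N2') (mB B1 psi1 psib1 B2 psi2 psib2))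
         (iotaPsi (N1' + N2') (mPsi psi1 psi2))
         (iotaPsib (N1' + N2') (mPsib psib1 psib2)) p).
Proof.
split; [|split].
- move=> N N' N'' h1 h2 p _; apply: part1; exact: ltnW.
- move=> N N' h f g hf hg; exact: (part2 (ltnW h)).
- exact: part3.
Qed.
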